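(* Let $\vec\psi$ satisfy (H1) and let $\mu$ be a unimodular probability measure on $\mathcal T_*$. For every compact region $K$ of $(\beta,B)$ there is a deterministic $C<\infty$ such that for $(\beta,B)\in K$ and $T\in\mathcal T_*$: (a) $|\Phi_T(\beta,B,h)|\le C(D_o^2+1)$ for every $h\in\mathcal H^\star_\mu(\beta,B)$; (b) if moreover $\psi>0$ everywhere, then $|\Phi_T(\beta,B,h)|\le C(D_o+1)$ for every message $h$. Consequently, on compact regions, $\Phi_\mu$ is uniformly bounded on $\mathcal H^\star_\mu$ whenever $\mathbb E_\mu[D_o^2]<\infty$, and, if $\psi>0$, uniformly bounded on all messages whenever $\mathbb E_\mu[D_o]<\infty$.
   Context: $\mathcal T_*$: rooted locally finite trees $(T,o)$ up to isomorphism; $\partial v$ neighbours, $D_v=|\partial v|$. A measure $\mu$ on rooted graphs is unimodular if $\mathbb E_\mu[\sum_x f(T,o,x)]=\mathbb E_\mu[\sum_x f(T,x,o)]$ for all nonnegative Borel $f$ on doubly-rooted graphs. $\mathcal T_\to$: trees rooted at a directed edge; $\mu^\uparrow$: law of $(T,J\to o)$, $T\sim\mu$ conditioned on $D_o\ge1$, $J$ uniform on $\partial o$. Specification: finite $\mathscr X$, symmetric $\psi^\beta:\mathscr X^2\to[0,\infty)$, $\bar\psi^B:\mathscr X\to[0,\infty)$; $\xi=\log\psi$, $\bar\xi=\log\bar\psi$. (H1): $\bar\psi^B>0$; some $\sigma^{\mathrm{perm}}$ has $\min_\sigma\psi^\beta(\sigma,\sigma^{\mathrm{perm}})>0$; $\bar\xi^B(\sigma)$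 is $C^1$ in $B$; each $\xi^\beta(\sigma,\sigma')$ is $\equiv-\infty$ or finite and $C^1$ in $\beta$. A message is a measurable $(T,x\to y)\mapsto h_{x\to y}\in\Delta_{\mathscr X}$ mod $\mu^\uparrow$-null sets. $\mathcal H^\star_\mu(\beta,B)$: messages with $h_{x\to y}(\sigma)\propto\bar\psi^B(\sigma)\prod_{v\in\partial x\setminus y}\sum_{\sigma_v}\psi^\beta(\sigma,\sigma_v)h_{v\to x}(\sigma_v)$ $\mu^\uparrow$-a.s. Bethe functional: $\Phi_T(\beta,B,h)=\log\{\sum_\sigma\bar\psi(\sigma)\prod_{j\in\partial o}\sum_{\sigma_j}\psi(\sigma,\sigma_j)h_{j\to o}(\sigma_j)\}-\frac12\sum_{j\in\partial o}\log\{\sum_{\sigma,\sigma_j}\psi(\sigma,\sigma_j)h_{j\to o}(\sigma_j)h_{o\to j}(\sigma)\}$ (empty product $=1$, empty sum $=0$), $\Phi_\mu=\mathbb E_\mu\Phi_T$. *)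

(* Defs.v *)
From HB Require Import structures.
From mathcomp Require Import all_boot all_order all_algebra.
From mathcomp Require Import all_classical all_reals all_analysis.
Set Implicit Arguments. Unset Strict Implicit. Unset Printing Implicit Defensive.
Import Order.TTheory GRing.Theory Num.Theory.
Import numFieldNormedType.Exports.
Local Open Scope ring_scope.
Local Open Scope classical_set_scope.

Definition C1 {R : realType} (f : R -> R) : Prop :=
  (forall x : R, derivable f x 1) /\ continuous (f^`()).

(** A specification: psi b s t = psi^beta(s,t), psib B s = bar psi^B(s),
    together with the standing conditions (nonnegative, psi symmetric)
    and hypothesis (H1). *)
Definition H1 {R : realType} {X : finType}
    (psi : R -> X -> X -> R) (psib : R -> X -> R) : Prop :=
  (forall b s t, 0 <= psi b s t) /\
  (forall b s t, psi b s t = psi b t s) /\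
  (forall B s, 0 < psib B s) /\
  (exists sperm : X, forall b s, 0 < psi b s sperm) /\
  (forall s, C1 (fun B => ln (psib B s))) /\
  (forall s t, (forall b, psi b s t = 0) \/
                   ((forall b, 0 < psi b s t) /\ C1 (fun b => ln (psi b s t)))).

(** Rooted locally finite trees, Ulam--Harris encoding: a tree is given by the
    number of children [c v] of each vertex [v : seq nat]; the root is [::],
    the children of [v] are [rcons v i] for [i < c v]. Every rooted locally
    finite tree is isomorphic to one of these. *)
Definition tree := seq nat -> nat.

Fixpoint valid_from (c : tree) (p s : seq nat) : bool :=
  match s with
  | [::] => true
  | i :: s' => (i < c p)%N && valid_from c (rcons p i) s'
  end.

Definition vertex (c : tree) (v : seq nat) : bool := valid_from c [::] v.

Definition children (c : tree) (v : seq nat) : seq (seq nat) :=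
  [seq rcons v i | i <- iota 0 (c v)].

Definition parent (v : seq nat) : seq nat := take (size v).-1 v.

Definition nbrs (c : tree) (v : seq nat) : seq (seq nat) :=
  (if nilp v then [::] else [:: parent v]) ++ children c v.

Definition Do (c : tree) : nat := size (nbrs c [::]).

(** Messages: [m x y] is h_{x -> y}; only its values on directed edges matter. *)
Definition msg (R : realType) (X : finType) := seq nat -> seq nat -> {ffun X -> R}.

Definition is_prob {R : realType} {X : finType} (p : {ffun X -> R}) : Prop :=
  (forall s, 0 <= p s) /\ \sum_s p s = 1.

Definition is_message {R : realType} {X : finType} (c : tree) (m : msg R X) : Prop :=
  forall x y, vertex c x -> y \in nbrs c x -> is_prob (m x y).

Definition bp_rhs {R : realType} {X : finType}
    (psi : R -> X -> X -> R) (psib : R -> X -> R) (b B : R)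
    (c : tree) (m : msg R X) (x y : seq nat) (s : X) : R :=
  psib B s * \prod_(v <- nbrs c x | v != y) \sum_t psi b s t * m v x t.

Definition bp_fixed {R : realType} {X : finType}
    (psi : R -> X -> X -> R) (psib : R -> X -> R) (b B : R)
    (c : tree) (m : msg R X) : Prop :=
  is_message c m /\
  forall x y, vertex c x -> y \in nbrs c x ->
    0 < \sum_s bp_rhs psi psib b B c m x y s /\
    forall s, m x y s = bp_rhs psi psib b B c m x y s /
                        \sum_s' bp_rhs psi psib b B c m x y s'.

Definition PhiT {R : realType} {X : finType}
    (psi : R -> X -> X -> R) (psib : R -> X -> R) (b B : R)
    (c : tree) (m : msg R X) : R :=
  ln (\sum_s psib B s * \prod_(j <- nbrs c [::]) \sum_t psi b s t * m j [::] t)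
  - 2^-1 * \sum_(j <- nbrs c [::])
             ln (\sum_s \sum_t psi b s t * m j [::] t * m [::] j s).

(* Main.v *)
Require Import Defs.
From HB Require Import structures.
From mathcomp Require Import all_boot all_order all_algebra.
From mathcomp Require Import all_classical all_reals all_analysis.
From mathcomp Require Import ring lra.
Import Order.TTheory GRing.Theory Num.Theory.
Import numFieldNormedType.Exports.
Local Open Scope ring_scope.
Local Open Scope classical_set_scope.

Lemma sum_prob_bnd (R : realType) (X : finType) (w : X -> R) (h : {ffun X -> R}) (lo hi : R) :
  is_prob h -> (forall t, lo <= w t <= hi) -> lo <= \sum_t w t * h t <= hi.
Proof.
move=> [h0 h1] hw; apply/andP; split.
- rewrite -[lo]mulr1 -h1 mulr_sumr; apply: ler_sum => t _.
  by rewrite ler_wpM2r //; case/andP: (hw t).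
- rewrite -[hi]mulr1 -h1 mulr_sumr; apply: ler_sum => t _.
  by rewrite ler_wpM2r //; case/andP: (hw t).
Qed.

Lemma prod_bnd (R : realType) (T : eqType) (r : seq T) (P : pred T) (F : T -> R) (lo hi : R) :
  0 <= lo -> lo <= 1 -> 1 <= hi -> (forall i, i \in r -> lo <= F i <= hi) ->
  lo ^+ size r <= \prod_(i <- r | P i) F i <= hi ^+ size r.
Proof.
move=> l0 l1 h1; elim: r => [|i r IH] hF; first by rewrite big_nil /= expr0 lexx.
have /andP[Fl Fh] := hF i (mem_head _ _).
have /andP[Rl Rh] : lo ^+ size r <= \prod_(i <- r | P i) F i <= hi ^+ size r.
  by apply: IH => k kr; apply: hF; rewrite in_cons kr orbT.
have lk0 : 0 <= lo ^+ size r by rewrite exprn_ge0.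
have hk1 : 1 <= hi ^+ size r by rewrite exprn_ege1.
rewrite big_cons /= !exprS; case: (P i); apply/andP; split.
- by apply: ler_pM.
- by apply: ler_pM => //; [exact: le_trans Fl | exact: le_trans Rl].
- nra.
- nra.
Qed.

Lemma ln_bnd (R : realType) (q x : R) (k : nat) :
  1 <= q -> q^-1 ^+ k <= x -> x <= q ^+ k -> `|ln x| <= k%:R * ln q.
Proof.
move=> q1 xl xh.
have q0 : 0 < q by exact: lt_le_trans q1.
have x0 : 0 < x by apply: lt_le_trans xl; rewrite exprn_gt0 // invr_gt0.
have qk0 : 0 < q ^+ k by rewrite exprn_gt0.
rewrite ler_norml; apply/andP; split.
- rewrite exprVn in xl.
  have := xl; rewrite -ler_ln ?posrE ?invr_gt0 // => /(le_trans _); apply.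
  by rewrite lnV ?posrE // lnXn // mulr_natl.
- have := xh; rewrite -ler_ln ?posrE // => /le_trans -> //.
  by rewrite lnXn // mulr_natl.
Qed.

Lemma aux_le1 (R : realType) (qi a w z : R) : 0 <= qi -> qi <= 1 -> 0 <= z -> 0 <= a -> a <= w -> qi * a <= w + z.
Proof. move=> *. nra. Qed.

Lemma aux_le2 (R : realType) (q a n : R) : 1 <= q -> n <= q -> 0 <= a -> a * n <= q * a.
Proof. move=> *. nra. Qed.

Lemma Z_bnd (R : realType) (X : finType) (psib : X -> R) (q : R) (sperm : X)
  (r : seq (seq nat)) (P : pred (seq nat)) (G : X -> seq nat -> R) :
  1 <= q -> #|X|%:R <= q -> (forall s, q^-1 <= psib s <= q) ->
  (forall s j, j \in r -> 0 <= G s j <= q) ->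
  (forall j, j \in r -> q^-1 <= G sperm j) ->
  q^-1 ^+ (size r).+2 <= \sum_s psib s * \prod_(j <- r | P j) G s j <= q ^+ (size r).+2.
Proof.
move=> q1 nq hb hG hGs.
have q0 : 0 < q by exact: lt_le_trans q1.
have qi0 : 0 <= q^-1 by rewrite invr_ge0 ltW.
have qi1 : q^-1 <= 1 by rewrite invf_le1.
have hP s : 0 ^+ size r <= \prod_(j <- r | P j) G s j <= q ^+ size r.
  by apply: prod_bnd => //; apply: hG.
have hPs : q^-1 ^+ size r <= \prod_(j <- r | P j) G sperm j <= q ^+ size r.
  apply: prod_bnd => // j jr; have /andP[_ h2] := hG sperm j jr.
  by rewrite h2 andbT; apply: hGs.
have hk1 : 1 <= q ^+ size r by rewrite exprn_ege1.
have lk0 : 0 <= q^-1 ^+ size r by rewrite exprn_ge0.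
have lk1 : q^-1 ^+ size r <= 1 by rewrite exprn_ile1.
apply/andP; split.
- rewrite (bigD1 sperm) //=.
  have Hs : 0 <= \sum_(i | i != sperm) psib i * \prod_(j <- r | P j) G i j.
    apply: sumr_ge0 => i _; apply: mulr_ge0.
      by have /andP[+ _] := hb i; apply: le_trans.
    by have /andP[+ _] := hP i; apply: le_trans; apply: exprn_ge0.
  have /andP[b1 _] := hb sperm; have /andP[p1 _] := hPs.
  rewrite !exprS.
  have : q^-1 * q^-1 ^+ size r <= psib sperm * \prod_(j <- r | P j) G sperm j by apply: ler_pM.
  have : 0 <= q^-1 * q^-1 ^+ size r by rewrite mulr_ge0.
  set a := q^-1 * q^-1 ^+ size r; set w := psib sperm * _; set z := \sum_(i | _) _.
  by move=> ha hw; apply: aux_le1.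
- apply: (le_trans (y := \sum_(s : X) q * q ^+ size r)).
    apply: ler_sum => s _; have /andP[b1 b2] := hb s; have /andP[p1 p2] := hP s.
    apply: ler_pM => //; first by apply: le_trans b1.
    by apply: le_trans p1; rewrite exprn_ge0.
  rewrite sumr_const -mulr_natr !exprS.
  have : 0 <= q * q ^+ size r by apply: mulr_ge0; [exact: ltW | exact: exprn_ge0 (ltW q0)].
  by move=> ha; apply: aux_le2.
Qed.

Lemma dsum_prob_bnd (R : realType) (X : finType) (w : X -> X -> R) (h g : {ffun X -> R}) (lo hi : R) :
  is_prob h -> is_prob g -> (forall s t, lo <= w s t <= hi) ->
  lo <= \sum_s \sum_t w s t * h t * g s <= hi.
Proof.
move=> hh hg hw.
under eq_bigr => s _ do rewrite -mulr_suml.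
apply: sum_prob_bnd => // s; exact: sum_prob_bnd.
Qed.

Lemma div_bnd (R : realType) (q x y : R) (k : nat) : 1 <= q ->
  q^-1 ^+ k <= x <= q ^+ k -> q^-1 ^+ k <= y <= q ^+ k ->
  q^-1 ^+ (k + k) <= x / y <= q ^+ (k + k).
Proof.
move=> q1 /andP[x1 x2] /andP[y1 y2].
have q0 : 0 < q by exact: lt_le_trans q1.
have l0 : 0 < q^-1 ^+ k by rewrite exprn_gt0 // invr_gt0.
have h0 : 0 < q ^+ k by rewrite exprn_gt0.
have y0 : 0 < y by exact: lt_le_trans y1.
have e1 : (q^-1 ^+ k)^-1 = q ^+ k by rewrite exprVn invrK.
have e2 : (q ^+ k)^-1 = q^-1 ^+ k by rewrite exprVn.
rewrite !exprD; apply/andP; split.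
- apply: ler_pM => //.
  + exact: ltW.
  + exact: ltW.
  + by rewrite -e2 lef_pV2 ?posrE.
- apply: ler_pM => //.
  + exact: (le_trans (ltW l0)).
  + by rewrite invr_ge0 ltW.
  + by rewrite -e1 lef_pV2 ?posrE.
Qed.

Lemma sum_abs_bnd (R : realType) (T : eqType) (r : seq T) (g : T -> R) (c : R) :
  (forall j, j \in r -> `|g j| <= c) -> `|\sum_(j <- r) g j| <= (size r)%:R * c.
Proof.
elim: r => [|i r IH] hg; first by rewrite big_nil normr0 mul0r.
rewrite big_cons /= -addn1 natrD mulrDl mul1r [X in _ <= X]addrC.
apply: (le_trans (ler_normD _ _)); apply: lerD.
  by apply: hg; rewrite mem_head.
by apply: IH => j jr; apply: hg; rewrite in_cons jr orbT.
Qed.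

Lemma nbrs_root (c : tree) : nbrs c [::] = [seq [:: i] | i <- iota 0 (c [::])].
Proof. by []. Qed.

Lemma nbrs_root_mem (c : tree) j : j \in nbrs c [::] -> vertex c j /\ [::] \in nbrs c j.
Proof.
rewrite nbrs_root => /mapP[i]; rewrite mem_iota add0n => /= hi ->; split.
  by rewrite /vertex /= hi.
by rewrite /nbrs /= mem_head.
Qed.

Lemma nbrs_root_uniq (c : tree) : uniq (nbrs c [::]).
Proof.
rewrite nbrs_root map_inj_uniq ?iota_uniq //.
by move=> a b [].
Qed.

Lemma poly_a (R : realType) (d L : R) : 0 <= d -> 0 <= L ->
  (d + 2) * L + 2^-1 * (d * ((d + 2 + (d + 2)) * L)) <= 4 * L * (d ^+ 2 + 1).
Proof.
move=> d0 L0.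
have -> : (d + 2) * L + 2^-1 * (d * ((d + 2 + (d + 2)) * L)) = ((d + 2) * (d + 1)) * L.
  by field.
have -> : 4 * L * (d ^+ 2 + 1) = (4 * (d ^+ 2 + 1)) * L by ring.
apply: ler_wpM2r => //; nra.
Qed.

Lemma poly_b (R : realType) (d L : R) : 0 <= d -> 0 <= L ->
  (d + 2) * L + 2^-1 * (d * (1 * L)) <= 4 * L * (d + 1).
Proof. move=> d0 L0; nra. Qed.

Lemma core (R : realType) (X : finType) (psi : R -> X -> X -> R) (psib : R -> X -> R)
  (b B q : R) (sperm : X) :
  1 <= q -> #|X|%:R <= q ->
  (forall s, q^-1 <= psib B s <= q) ->
  (forall s t, 0 <= psi b s t <= q) ->
  (forall t, q^-1 <= psi b sperm t) ->
  (forall (c : tree) (m : msg R X), bp_fixed psi psib b B c m ->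
     `|PhiT psi psib b B c m| <= 4 * ln q * ((Do c)%:R ^+ 2 + 1)) /\
  ((forall s t, q^-1 <= psi b s t) -> forall (c : tree) (m : msg R X), is_message c m ->
     `|PhiT psi psib b B c m| <= 4 * ln q * ((Do c)%:R + 1)).
Proof.
move=> q1 nq hb hp hps.
have q0 : 0 < q by exact: lt_le_trans q1.
have L0 : 0 <= ln q by rewrite ln_ge0.
have hw : forall t, q^-1 <= psi b sperm t <= q.
  by move=> t; rewrite hps; have /andP[_ ->] := hp sperm t.
have Zo_bnd : forall (c : tree) (m : msg R X), is_message c m ->
   q^-1 ^+ (Do c).+2 <= \sum_s psib B s * \prod_(j <- nbrs c [::]) \sum_t psi b s t * m j [::] t
     <= q ^+ (Do c).+2.
  move=> c m hm; apply: (@Z_bnd R X (psib B) q sperm) => //.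
  - move=> s j /nbrs_root_mem [vj oj]; apply: sum_prob_bnd; first exact: hm.
    exact: hp.
  - move=> j /nbrs_root_mem [vj oj].
    by have /andP[] := @sum_prob_bnd R X (psi b sperm) (m j [::]) q^-1 q (hm j [::] vj oj) hw.
have Phi_bnd : forall (c : tree) (m : msg R X) (e : R), is_message c m ->
   (forall j, j \in nbrs c [::] ->
      `|ln (\sum_s \sum_t psi b s t * m j [::] t * m [::] j s)| <= e * ln q) ->
   `|PhiT psi psib b B c m| <= ((Do c)%:R + 2) * ln q + 2^-1 * ((Do c)%:R * (e * ln q)).
  move=> c m e hm he; rewrite /PhiT.
  apply: (le_trans (ler_normB _ _)); apply: lerD.
    have /andP[z1 z2] := Zo_bnd c m hm.
    have := @ln_bnd R q _ _ q1 z1 z2; by rewrite -addn2 natrD.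
  rewrite normrM ger0_norm ?invr_ge0 ?ler0n //; apply: ler_wpM2l; first by rewrite invr_ge0 ler0n.
  exact: sum_abs_bnd.
split.
- move=> c m [hm hbp].
  apply: (le_trans (Phi_bnd c m ((Do c)%:R + 2 + ((Do c)%:R + 2)) hm _)); last first.
    by apply: poly_a.
  move=> j jr; have [vj oj] := @nbrs_root_mem c j jr.
  have [Npos hmeq] := hbp [::] j isT jr.
  have [N eN] : exists N, N = \sum_s bp_rhs psi psib b B c m [::] j s by eexists.
  rewrite -eN in Npos hmeq.
  have eqZ : \sum_s \sum_t psi b s t * m j [::] t * m [::] j s =
      (\sum_s psib B s * \prod_(v <- nbrs c [::]) \sum_t psi b s t * m v [::] t) / N.
    rewrite mulr_suml; apply: eq_bigr => s _.
    rewrite -mulr_suml hmeq /bp_rhs (bigD1_seq j jr (nbrs_root_uniq c)) /=.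
    by rewrite !mulrA [_ * psib B s]mulrC.
  rewrite eqZ.
  have /andP[z1 z2] := Zo_bnd c m hm.
  have /andP[n1 n2] : q^-1 ^+ (Do c).+2 <= N <= q ^+ (Do c).+2.
    rewrite eN /bp_rhs; apply: (@Z_bnd R X (psib B) q sperm) => //.
    - move=> s v /nbrs_root_mem [vv ov]; apply: sum_prob_bnd; first exact: hm.
      exact: hp.
    - move=> v /nbrs_root_mem [vv ov].
      by have /andP[] := @sum_prob_bnd R X (psi b sperm) (m v [::]) q^-1 q (hm v [::] vv ov) hw.
  have /andP[w1 w2] := @div_bnd R q _ _ _ q1 (introT andP (conj z1 z2)) (introT andP (conj n1 n2)).
  have := @ln_bnd R q _ _ q1 w1 w2; by rewrite natrD -addn2 natrD.
- move=> hpl c m hm.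
  apply: (le_trans (Phi_bnd c m 1 hm _)); last first.
    by apply: poly_b.
  move=> j jr; have [vj oj] := @nbrs_root_mem c j jr.
  have hw2 : forall s t, q^-1 <= psi b s t <= q.
    by move=> s t; rewrite hpl; have /andP[_ ->] := hp s t.
  have /andP[w1 w2] := @dsum_prob_bnd R X (psi b) (m j [::]) (m [::] j) q^-1 q
      (hm j [::] vj oj) (hm [::] j isT jr) hw2.
  have := @ln_bnd R q _ 1 q1; rewrite !expr1; by apply.
Qed.

Lemma bounded_get (R : realType) (V : normedModType R) (A : set V) :
  compact A -> exists r : R, forall x, A x -> `|x| <= r.
Proof.
move=> /compact_bounded H; case: H => r [rr Hr].
exists (`|r| + 1) => x Ax; apply: (Hr (`|r| + 1)) => //.
by apply: (le_lt_trans (ler_norm r)); rewrite ltrDl.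
Qed.

Lemma bnd_on_K (R : realType) (K : set (R * R)) (f : R -> R) :
  compact K -> continuous f ->
  exists M : R, 0 <= M /\ forall b B, K (b, B) -> `|f b| <= M /\ `|f B| <= M.
Proof.
move=> hK fc.
have [r Hr] := @bounded_get R _ K hK.
have Hc : {within `[- `|r|, `|r|], continuous f}.
  by apply: continuous_subspaceT => x xin; apply: fc.
have cI := @continuous_compact R R f `[- `|r|, `|r|]%classic Hc (@segment_compact R _ _).
have [M HM] := @bounded_get R R^o _ cI.
exists (Num.max M 0); split; first by rewrite le_max lexx orbT.
have key : forall x, `|x| <= r -> `|f x| <= Num.max M 0.
  move=> x hx; rewrite le_max; apply/orP; left; apply: HM.
  exists x => //=; rewrite in_itv /= -ler_norml.
  exact: (le_trans hx (ler_norm r)).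
move=> b B KbB; have := Hr _ KbB; rewrite prod_normE /= ge_max => /andP[h1 h2].
by split; apply: key.
Qed.


Lemma C1_cont (R : realType) (f : R -> R) : C1 f -> continuous f.
Proof.
move=> [hd _] x; apply: differentiable_continuous; rewrite -derivable1_diffP.
exact: hd.
Qed.

Lemma fin_bound (R : realType) (I : finType) (P : I -> R -> Prop) :
  (forall i M M', M <= M' -> P i M -> P i M') ->
  (forall i, exists M, 0 <= M /\ P i M) -> exists M, 0 <= M /\ forall i, P i M.
Proof.
move=> mono hex.
have [f hf] := boolp.choice hex.
exists (\sum_i f i); split.
  by apply: sumr_ge0 => i _; case: (hf i).
move=> i; apply: (mono i (f i)); last by case: (hf i).
rewrite (bigD1 i) //= lerDl; apply: sumr_ge0 => j _; by case: (hf j).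
Qed.

Lemma lnb_inv (R : realType) (x M q : R) :
  0 < x -> `|ln x| <= M -> expR M <= q -> q^-1 <= x <= q.
Proof.
move=> x0; rewrite ler_norml => /andP[l1 l2] hq.
have ex : expR (ln x) = x by rewrite lnK.
have eM0 : 0 < expR M by rewrite expR_gt0.
apply/andP; split.
- apply: (le_trans (y := expR (- M))).
    by rewrite expRN lef_pV2 ?posrE ?expR_gt0 //; apply: lt_le_trans hq.
  by rewrite -ex ler_expR.
- by apply: (le_trans _ hq); rewrite -ex ler_expR.
Qed.

Import measurable_realfun.

Lemma int_bnd (R : realType) (d : measure_display) (Omega : measurableType d)
  (P : probability Omega R) (f g : Omega -> R) (C : R) :
  0 <= C -> measurable_fun setT f -> measurable_fun setT g -> (forall w, 0 <= g w) ->
  (\int[P]_w (g w)%:E < +oo)%E ->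
  {ae P, forall w, `|f w| <= C * (g w + 1)} ->
  (`|\int[P]_w (f w)%:E| <= (C * (fine (\int[P]_w (g w)%:E) + 1))%:E)%E.
Proof.
move=> C0 mf mg g0 gfin hae.
have mfE : measurable_fun setT (EFin \o f) by apply/measurable_EFinP.
have mgE : measurable_fun setT (EFin \o g) by apply/measurable_EFinP.
apply: (le_trans (le_abse_integral _ _ mfE)) => //.
have mh : measurable_fun setT (fun w => (C * (g w + 1))%:E).
  apply/measurable_EFinP; apply: measurable_funM => //.
  by apply: measurable_funD.
have h1 : forall w, setT w -> (0 <= `|(EFin \o f) w|)%E by move=> w _; rewrite abse_ge0.
have h2 : measurable_fun setT (fun w => `|(EFin \o f) w|)%E by exact: measurableT_comp.
have h3 : forall w, setT w -> (0 <= (C * (g w + 1))%:E)%E.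
  by move=> w _; rewrite lee_fin mulr_ge0 // addr_ge0.
have h4 : {ae P, forall w, setT w -> (`|(EFin \o f) w| <= (C * (g w + 1))%:E)%E}.
  by apply: filterS hae => w hw _; rewrite /= lee_fin.
apply: (le_trans (@ae_ge0_le_integral _ _ _ P setT measurableT _ _ h1 h2 h3 mh h4)).
have -> : (fun w => (C * (g w + 1))%:E) = (fun w => C%:E * ((g w)%:E + 1))%E.
  by apply: funext => w; rewrite EFinM EFinD.
rewrite ge0_integralZl_EFin //; try (by move=> w _; rewrite adde_ge0 // lee_fin);
  try (by apply: emeasurable_funD).
rewrite ge0_integralD //; try (by move=> w _; rewrite lee_fin).
have -> : (\int[P]_w 1 = 1)%E.
  by rewrite -[(fun _ => _)]/(cst 1%E) integral_cst // mul1e; apply: probability_setT.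
have ifin : (\int[P]_w (g w)%:E)%E \is a fin_num.
  rewrite ge0_fin_numE //; apply: integral_ge0 => w _; by rewrite lee_fin.
by rewrite -{1}(fineK ifin) -EFinD -EFinM.
Qed.

Theorem mainTheorem9 (R : realType) (X : finType)
    (psi : R -> X -> X -> R) (psib : R -> X -> R)
    (hH1 : H1 psi psib) (K : set (R * R)) (hK : compact K) :
  exists C : R,
    (* (a) *)
    (forall b B, K (b, B) -> forall (c : tree) (m : msg R X),
       bp_fixed psi psib b B c m ->
       `|PhiT psi psib b B c m| <= C * ((Do c)%:R ^+ 2 + 1))
    /\
    (* (b) *)
    ((forall b s t, 0 < psi b s t) ->
     forall b B, K (b, B) -> forall (c : tree) (m : msg R X),
       is_message c m ->
       `|PhiT psi psib b B c m| <= C * ((Do c)%:R + 1))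
    /\
    (* consequence: integrated version for a random tree *)
    (forall (d : measure_display) (Omega : measurableType d)
            (P : probability Omega R) (T : Omega -> tree),
       measurable_fun setT (fun w => (Do (T w))%:R : R) ->
       ((\int[P]_w (((Do (T w))%:R ^+ 2 : R))%:E < +oo)%E ->
        exists C' : R, forall b B, K (b, B) -> forall m : Omega -> msg R X,
          {ae P, forall w, bp_fixed psi psib b B (T w) (m w)} ->
          measurable_fun setT (fun w => PhiT psi psib b B (T w) (m w)) ->
          (`| \int[P]_w (PhiT psi psib b B (T w) (m w))%:E | <= C'%:E)%E)
       /\
       ((forall b s t, 0 < psi b s t) ->
        (\int[P]_w ((Do (T w))%:R : R)%:E < +oo)%E ->
        exists C' : R, forall b B, K (b, B) -> forall m : Omega -> msg R X,
          {ae P, forall w, is_message (T w) (m w)} ->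
          measurable_fun setT (fun w => PhiT psi psib b B (T w) (m w)) ->
          (`| \int[P]_w (PhiT psi psib b B (T w) (m w))%:E | <= C'%:E)%E)).

Proof.
move: hH1 => [hp0 [hsym [hbpos [[sperm hsp] [hC1b hcase]]]]].
have contb s : continuous (fun B => ln (psib B s)) by apply: C1_cont; apply: hC1b.
have contp s t : continuous (fun b => ln (psi b s t)).
  case: (hcase s t) => [h0 | [hpos hc]]; last exact: C1_cont.
  have -> : (fun b => ln (psi b s t)) = (fun=> ln 0) by apply: boolp.funext => b; rewrite h0.
  exact: cst_continuous.
have [Mb [Mb0 HMb]] : exists M : R, 0 <= M /\ forall s b B, K (b, B) -> `|ln (psib B s)| <= M.
  apply: (@fin_bound R X (fun s M => forall b B, K (b, B) -> `|ln (psib B s)| <= M)).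
    by move=> s M M' hMM' h b B hk; apply: le_trans hMM'; apply: h hk.
  move=> s; have [M [M0 HM]] := @bnd_on_K R K (fun B => ln (psib B s)) hK (contb s).
  by exists M; split => // b B hk; case: (HM b B hk).
have [Mp [Mp0 HMp]] : exists M : R, 0 <= M /\
    forall p : (X * X)%type, forall b B, K (b, B) -> `|ln (psi b p.1 p.2)| <= M.
  apply: (@fin_bound R (X * X)%type (fun p M => forall b B, K (b, B) -> `|ln (psi b p.1 p.2)| <= M)).
    by move=> p M M' hMM' h b B hk; apply: le_trans hMM'; apply: h hk.
  move=> p; have [M [M0 HM]] := @bnd_on_K R K (fun b => ln (psi b p.1 p.2)) hK (contp p.1 p.2).
  by exists M; split => // b B hk; case: (HM b B hk).
set Mt := Mb + Mp.
set q := #|X|%:R * expR Mt.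
have hX : (0 < #|X|)%N by apply/card_gt0P; exists sperm.
have a1 : 1 <= expR Mt.
  apply: (le_trans _ (expR_ge1Dx _)); by rewrite lerDl addr_ge0.
have n1 : 1 <= #|X|%:R :> R by rewrite ler1n.
have aq : expR Mt <= q by rewrite /q ler_peMl // (le_trans ler01 a1).
have q1 : 1 <= q by apply: le_trans aq.
have nq : #|X|%:R <= q by rewrite /q ler_peMr // (le_trans ler01 n1).
have hMb s b B : K (b, B) -> `|ln (psib B s)| <= Mt.
  by move=> hk; apply: (le_trans (HMb s b B hk)); rewrite lerDl.
have hMp s t b B : K (b, B) -> `|ln (psi b s t)| <= Mt.
  by move=> hk; apply: (le_trans (HMp (s, t) b B hk)); rewrite lerDr.
have CORE b B : K (b, B) ->
  (forall (c : tree) (m : msg R X), bp_fixed psi psib b B c m ->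
     `|PhiT psi psib b B c m| <= 4 * ln q * ((Do c)%:R ^+ 2 + 1)) /\
  ((forall s t, q^-1 <= psi b s t) -> forall (c : tree) (m : msg R X), is_message c m ->
     `|PhiT psi psib b B c m| <= 4 * ln q * ((Do c)%:R + 1)).
  move=> hk; apply: (@core R X psi psib b B q sperm q1 nq).
  - by move=> s; apply: (@lnb_inv R _ _ _ (hbpos B s) (hMb s b B hk) aq).
  - move=> s t; case: (hcase s t) => [h0 | [hpos _]].
      by rewrite h0 lexx /= (le_trans ler01 q1).
    have /andP[_ ->] := @lnb_inv R _ _ _ (hpos b) (hMp s t b B hk) aq.
    by rewrite ltW.
  - move=> t; have hpt : 0 < psi b sperm t by rewrite hsym hsp.
    by have /andP[] := @lnb_inv R _ _ _ hpt (hMp sperm t b B hk) aq.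
have C0 : 0 <= 4 * ln q by rewrite mulr_ge0 // ln_ge0.
have POS b B : K (b, B) -> (forall b s t, 0 < psi b s t) -> forall s t, q^-1 <= psi b s t.
  move=> hk hpos s t.
  by have /andP[] := @lnb_inv R _ _ _ (hpos b s t) (hMp s t b B hk) aq.
exists (4 * ln q); split; [|split].
- by move=> b B hk; case: (CORE b B hk).
- move=> hpos b B hk; case: (CORE b B hk) => _; apply; exact: (POS b B hk hpos).
move=> d Omega P T mD; split.
- move=> hint; exists (4 * ln q * (fine (\int[P]_w (((Do (T w))%:R ^+ 2 : R))%:E) + 1)).
  move=> b B hk m hae mPhi.
  apply: (@int_bnd R d Omega P _ _ _ C0 mPhi _ _ hint).
  + exact: measurable_realfun.measurable_funX.
  + by move=> w; rewrite exprn_ge0.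
  + by apply: filterS hae => w hw; case: (CORE b B hk) => + _; apply.
- move=> hpos hint; exists (4 * ln q * (fine (\int[P]_w ((Do (T w))%:R : R)%:E) + 1)).
  move=> b B hk m hae mPhi.
  apply: (@int_bnd R d Omega P _ _ _ C0 mPhi mD _ hint).
  + by move=> w; rewrite ler0n.
  + apply: filterS hae => w hw; case: (CORE b B hk) => _; apply => //; exact: (POS b B hk hpos).
Qed.
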